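(* Let $\Gamma$ be a weighted digraph with vertex set $V(\Gamma)=\{1,\dots,n\}$, $n>1$, without loops and with strictly positive arc weights, and let $\widehat\Gamma$ be its ground extension. Let $0\le k\le n$ and let $\mathcal I=\{i_1,\dots,i_k\}\subseteq V(\Gamma)$, $\mathcal J=\{j_1,\dots,j_k\}\subseteq V(\Gamma)$. Let $A$ be the set of in-forests of $\Gamma$ in which, for every $u=1,\dots,k$, the vertex $i_u$ belongs to the tree whose root is $j_u$. Let $B$ be the set of in-forests $F$ of $\widehat\Gamma$ consisting of exactly $k+1$ trees such that $0$ is the root of the tree containing $0$ and, for every $u=1,\dots,k$, $i_u$ belongs to the tree of $F$ whose root is $j_u$. Then there is a weight-preserving bijection between $A$ and $B$.
   Context: $W=(w_{ij})$ is the matrix of arc weights ($w_{ij}>0$ iff there is an arc $i\to j$, else $0$). The weight of a subgraph is the product of its arc weights (1 if no arcs). A converging tree is a weakly connected digraph with one vertex (the root) of outdegree 0 and all others of outdegree 1; an in-forest of a digraph is a spanning subgraph whose weak components are converging trees. The ground extension $\widehat\Gamma$ of $\Gamma$ is the weighted digraph with vertex set $V(\Gamma)\cup\{0\}$, arc set $E(\Gamma)\cup\{(j,0):j\in V(\Gamma)\}$, the arcs of $\Gamma$ keeping their weights and each arc $(j,0)$ having weight 1. *)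

(* Defs.v *)
From HB Require Import structures.
From mathcomp Require Import all_boot all_order all_algebra.
Set Implicit Arguments. Unset Strict Implicit. Unset Printing Implicit Defensive.
Import Order.TTheory GRing.Theory Num.Theory.
Local Open Scope ring_scope.

(* A spanning subgraph of a digraph on the finite vertex type T is given by
   its arc set F : {set T * T}. *)
Section Digraphs.
Variable T : finType.

Definition outdeg (F : {set T * T}) (x : T) : nat := #|[set y | (x, y) \in F]|.

Definition wrel (F : {set T * T}) : rel T := fun x y => ((x, y) \in F) || ((y, x) \in F).
Definition wconn (F : {set T * T}) (x y : T) : bool := connect (wrel F) x y.

Definition wcomp (F : {set T * T}) (x : T) : {set T} := [set y | wconn F x y].

Definition converging_tree_comp (F : {set T * T}) (C : {set T}) : Prop :=
  exists r, [/\ r \in C, outdeg F r = 0%N &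
             forall v, v \in C -> v != r -> outdeg F v = 1%N].

Definition in_forest (E F : {set T * T}) : Prop :=
  F \subset E /\ forall x, converging_tree_comp F (wcomp F x).

Definition is_root (F : {set T * T}) (r : T) : bool := outdeg F r == 0%N.
Definition in_tree_rooted (F : {set T * T}) (v r : T) : bool :=
  is_root F r && wconn F v r.

(* number of trees of an in-forest = number of roots *)
Definition ntrees (F : {set T * T}) : nat := #|[set r | is_root F r]|.

Definition sg_weight (R : comPzRingType) (w : T -> T -> R) (F : {set T * T}) : R :=
  \prod_(a in F) w a.1 a.2.
End Digraphs.

(* The weighted digraph Gamma on 'I_n given by its weight matrix W:
   arc i -> j iff W i j > 0. *)
Definition arcs (R : numDomainType) (n : nat) (W : 'M[R]_n) : {set 'I_n * 'I_n} :=
  [set a | 0 < W a.1 a.2].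

(* Ground extension: vertex set option 'I_n, None playing the role of 0. *)
Definition ground_arcs (R : numDomainType) (n : nat) (W : 'M[R]_n)
  : {set option 'I_n * option 'I_n} :=
  [set a | match a with
           | (Some i, Some j) => 0 < W i j
           | (Some _, None) => true
           | _ => false
           end].

Definition ground_weight (R : numDomainType) (n : nat) (W : 'M[R]_n)
  (x y : option 'I_n) : R :=
  match x, y with
  | Some i, Some j => W i j
  | Some _, None => 1
  | _, _ => 0
  end.

Definition inA (R : numDomainType) (n k : nat) (W : 'M[R]_n) (I J : 'I_k -> 'I_n)
  (F : {set 'I_n * 'I_n}) : Prop :=
  in_forest (arcs W) F /\ forall u, in_tree_rooted F (I u) (J u).

Definition inB (R : numDomainType) (n k : nat) (W : 'M[R]_n) (I J : 'I_k -> 'I_n)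
  (F : {set option 'I_n * option 'I_n}) : Prop :=
  [/\ in_forest (ground_arcs W) F, ntrees F = k.+1, is_root F None &
      forall u, in_tree_rooted F (Some (I u)) (Some (J u))].

(* Main.v *)
Require Import Defs.
From HB Require Import structures.
From mathcomp Require Import all_boot all_order all_algebra.
Set Implicit Arguments. Unset Strict Implicit. Unset Printing Implicit Defensive.
Import Order.TTheory GRing.Theory Num.Theory.
Local Open Scope ring_scope.
Lemma connect_closed (T : finType) (e : rel T) (Q : pred T) x y :
  (forall a b, Q a -> e a b -> Q b) -> Q x -> connect e x y -> Q y.
Proof.
move=> H Qx /connectP [p pth ->]; elim: p x Qx pth => [|c p IH] x Qx //=.
by case/andP=> exc pth; apply: IH pth; apply: H exc.
Qed.

Lemma connect_hom (T1 T2 : finType) (e1 : rel T1) (e2 : rel T2) (h : T1 -> T2) x y :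
  (forall a b, e1 a b -> e2 (h a) (h b)) -> connect e1 x y -> connect e2 (h x) (h y).
Proof.
move=> H; apply: (connect_closed (Q := fun z => connect e2 (h x) (h z))) => //.
by move=> a b ca /H eab; apply: connect_trans ca (connect1 eab).
Qed.

Section Gen.
Variable T : finType.
Implicit Types F : {set T * T}.

Definition drel F : rel T := fun a b => (a, b) \in F.

Lemma isrootP F r : reflect (forall y, (r, y) \notin F) (is_root F r).
Proof.
rewrite /is_root /outdeg cards_eq0; apply: (iffP eqP).
  by move=> E y; apply/negP=> ry; have := in_set0 y; rewrite -E inE ry.
by move=> H; apply/setP=> y; rewrite !inE (negbTE (H y)).
Qed.

Lemma le1P F x : reflect (forall y1 y2, (x,y1) \in F -> (x,y2) \in F -> y1 = y2)
  (outdeg F x <= 1)%N.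
Proof.
rewrite /outdeg; apply: (iffP card_le1_eqP).
  by move=> H y1 y2 h1 h2; apply/esym/H; rewrite inE.
by move=> H y1 y2; rewrite !inE => h1 h2; apply/esym/H.
Qed.

Lemma wconn_sym F x y : wconn F x y = wconn F y x.
Proof. by apply: sym_connect_sym => a b; rewrite /wrel orbC. Qed.

Lemma drel_wconn F x y : connect (drel F) x y -> wconn F x y.
Proof. by apply: connect_sub => a b ab; apply: connect1; apply/orP; left. Qed.

Lemma prop_root F r : (forall v, outdeg F v <= 1)%N -> is_root F r ->
  forall y, wconn F r y -> connect (drel F) y r.
Proof.
move=> le1 rr y; apply: (connect_closed (Q := fun z => connect (drel F) z r)) => // a b ar /orP [ab|ba].
  case/connectP: ar => [[|c p]] /=.
    by move=> _ ear; move/isrootP: rr => /(_ b); rewrite ear ab.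
  case/andP=> ac pth ->; have cb := le1P _ _ (le1 a) _ _ ac ab.
  by apply/connectP; exists p; rewrite -?cb.
by apply: connect_trans ar; apply: connect1.
Qed.

Lemma root_connect F r y : is_root F r -> connect (drel F) r y -> y = r.
Proof.
move=> /isrootP rr /connectP [[|c p]] /= => [_ -> //|/andP [rc _] _].
by have := rr c; rewrite /drel in rc; rewrite rc.
Qed.

Lemma forestP F : (forall x, converging_tree_comp F (wcomp F x)) <->
  (forall v, outdeg F v <= 1)%N /\
  (forall v, exists2 r, is_root F r & connect (drel F) v r).
Proof.
split.
  move=> H; have le1 : forall v, (outdeg F v <= 1)%N.
    move=> v; have [r [_ r0 Hr]] := H v.
    have vin : v \in wcomp F v by rewrite inE /wconn connect0.
    by case: (eqVneq v r) => [->|/(Hr _ vin) ->]; rewrite ?r0.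
  split=> // v; have [r [rin r0 _]] := H v.
  exists r; first by rewrite /is_root r0.
  by apply: prop_root; rewrite ?/is_root ?r0 // wconn_sym; rewrite inE in rin.
move=> [le1 ex] x; have [r rr xr] := ex x.
exists r; split.
- by rewrite inE; apply: drel_wconn.
- by apply/eqP.
move=> v; rewrite inE => xv vr.
have := le1 v; rewrite leq_eqVlt ltnS leqn0 => /orP [/eqP //|v0].
have vx : wconn F r v.
  have xv2 : wconn F v x by rewrite wconn_sym.
  by rewrite wconn_sym; apply: connect_trans xv2 (drel_wconn xr).
have := prop_root le1 rr vx; move/(root_connect v0) => evr.
by rewrite evr eqxx in vr.
Qed.
End Gen.
Section Main.
Variables (R : realFieldType) (n : nat) (W : 'M[R]_n) (k : nat)
  (I J : 'I_k -> 'I_n).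
Hypothesis Jinj : injective J.

Definition fmap (F : {set 'I_n * 'I_n}) : {set option 'I_n * option 'I_n} :=
  [set a | match a with
           | (Some x, Some y) => (x, y) \in F
           | (Some x, None) => is_root F x && (x \notin codom J)
           | _ => false end].

Definition gmap (G : {set option 'I_n * option 'I_n}) : {set 'I_n * 'I_n} :=
  [set a | (Some a.1, Some a.2) \in G].

Lemma fmapSS F x y : ((Some x, Some y) \in fmap F) = ((x, y) \in F).
Proof. by rewrite inE. Qed.
Lemma fmapSN F x : ((Some x, None) \in fmap F) = is_root F x && (x \notin codom J).
Proof. by rewrite inE. Qed.
Lemma fmapN F b : ((None, b) \in fmap F) = false.
Proof. by rewrite inE; case: b. Qed.
Lemma gSS G x y : ((x, y) \in gmap G) = ((Some x, Some y) \in G).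
Proof. by rewrite inE. Qed.

Lemma root_fN F : is_root (fmap F) None.
Proof. by apply/isrootP => b; rewrite fmapN. Qed.

Lemma root_fS F x : is_root (fmap F) (Some x) = is_root F x && (x \in codom J).
Proof.
apply/isrootP/andP.
  move=> H; have rx : is_root F x by apply/isrootP => y; have := H (Some y); rewrite fmapSS.
  by split=> //; have := H None; rewrite fmapSN rx /= negbK.
move=> [rx cx] [y|]; last by rewrite fmapSN rx cx.
by rewrite fmapSS; move/isrootP: rx.
Qed.

Lemma SJ_mem x : (Some x \in [set Some (J u) | u : 'I_k]) = (x \in codom J).
Proof.
apply/imsetP/codomP => [[u _ [->]]|[u ->]]; by exists u.
Qed.

Lemma N_notin : None \notin [set Some (J u) | u : 'I_k].
Proof. by apply/imsetP => [[u _]]. Qed.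

Lemma card_SJ : #|[set Some (J u) | u : 'I_k]| = k.
Proof.
by rewrite card_imset ?cardT ?size_enum_ord // => u v [/Jinj].
Qed.

Lemma partA F : inA W I J F -> inB W I J (fmap F).
Proof.
move=> [[sub /forestP [le1 ex]] tr].
have rJ u : is_root F (J u) by case/andP: (tr u).
have hw a b : wrel F a b -> wrel (fmap F) (Some a) (Some b).
  by rewrite /wrel !fmapSS.
have hd a b : drel F a b -> drel (fmap F) (Some a) (Some b).
  by rewrite /drel fmapSS.
split.
- split.
    apply/subsetP => [[[x|] [y|]]]; rewrite ?fmapSS ?fmapSN ?fmapN ?inE //.
    by move/(subsetP sub); rewrite inE.
  apply/forestP; split.
    move=> [x|]; last by move/eqP: (root_fN F) => ->.
    apply/le1P => [[y1|] [y2|]]; rewrite ?fmapSS ?fmapSN //.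
    + by move=> h1 h2; congr Some; apply: (le1P _ _ (le1 x)).
    + by move=> h1 /andP [/isrootP rx _]; have := rx y1; rewrite h1.
    + by move=> /andP [/isrootP rx _] h2; have := rx y2; rewrite h2.
  move=> [x|]; last by exists None; rewrite ?root_fN.
  have [r rr xr] := ex x.
  have xr' := connect_hom hd xr.
  case cr: (r \in codom J).
    by exists (Some r) => //; rewrite root_fS rr cr.
  exists None; first exact: root_fN.
  by apply: connect_trans xr' (connect1 _); rewrite /drel fmapSN rr cr.
- rewrite /ntrees; have -> : [set r | is_root (fmap F) r] = None |: [set Some (J u) | u : 'I_k].
    apply/setP => [[x|]]; rewrite !inE ?root_fN ?root_fS //.
    rewrite SJ_mem /=; apply/idP/idP => [/andP [] //|cx].
    by case/codomP: (cx) => u ->; rewrite rJ codom_f.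
  by rewrite cardsU1 N_notin card_SJ.
- exact: root_fN.
move=> u; apply/andP; split; first by rewrite root_fS rJ codom_f.
by apply: connect_hom hw _; case/andP: (tr u).
Qed.

Lemma gfK F : gmap (fmap F) = F.
Proof. by apply/setP => [[x y]]; rewrite gSS fmapSS. Qed.

Lemma partB G : inB W I J G -> inA W I J (gmap G) /\ fmap (gmap G) = G.
Proof.
move=> [[sub /forestP [le1 ex]] nt rN tr].
have noN b : (None, b) \notin G by move/isrootP: rN.
have rJ u : is_root G (Some (J u)) by case/andP: (tr u).
have rootS z : is_root G (Some z) -> is_root (gmap G) z.
  by move/isrootP=> H; apply/isrootP => y; rewrite gSS.
have rootNN z : (Some z, None) \in G -> is_root (gmap G) z.
  move=> zN; apply/isrootP => y; rewrite gSS; apply/negP => zy.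
  by have := le1P _ _ (le1 (Some z)) _ _ zN zy.
have proj : forall p x, path (drel G) (Some x) p -> exists2 z,
    connect (drel (gmap G)) x z &
    (last (Some x) p = Some z \/ ((Some z, None) \in G /\ last (Some x) p = None)).
  elim=> [|c p IH] x /=; first by move=> _; exists x => //; left.
  case/andP; case: c => [y|] xc pth.
    have [z yz H] := IH y pth; exists z => //.
    by apply: connect_trans yz; apply: connect1; rewrite /drel gSS.
  case: p {IH} pth => [_|d p] /=; first by exists x => //; right.
  by case/andP; rewrite /drel (negbTE (noN d)).
have le1g v : (outdeg (gmap G) v <= 1)%N.
  apply/le1P => y1 y2; rewrite !gSS => h1 h2.
  by have [] := le1P _ _ (le1 (Some v)) _ _ h1 h2.
have gA : inA W I J (gmap G).
  split.
    split.
      apply/subsetP => [[x y]]; rewrite gSS => /(subsetP sub).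
      by rewrite !inE.
    apply/forestP; split=> // v.
    have [rho rr /connectP [p pth lp]] := ex (Some v).
    have [z vz [lz|[zN lz]]] := proj p v pth; exists z => //.
      by apply: rootS; rewrite -lz -lp.
    exact: rootNN.
  move=> u; apply/andP; split; first exact: rootS.
  have := tr u => /andP [_ w].
  rewrite wconn_sym in w.
  have /connectP [p pth lp] := prop_root le1 (rJ u) w.
  have [z vz [lz|[zN lz]]] := proj p _ pth.
    by move: lz; rewrite -lp => [[->]]; apply: drel_wconn.
  by rewrite -lp in lz.
split=> //.
apply/setP => [[[x|] [y|]]]; rewrite ?fmapSS ?gSS ?fmapN ?(negbTE (noN _)) //.
rewrite fmapSN; apply/idP/idP.
  case/andP=> rx cx; apply/negPn/negP => xN.
  have rSx : is_root G (Some x).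
    by apply/isrootP => [[y|]] //; move/isrootP: rx => /(_ y); rewrite gSS.
  have : (#|None |: (Some x |: [set Some (J u) | u : 'I_k])| <= k.+1)%N.
    rewrite -nt; apply: subset_leq_card; apply/subsetP => a.
    rewrite !inE => /orP [/eqP ->//|/orP [/eqP ->//|/imsetP [u _ ->]]].
    exact: rJ.
  rewrite cardsU1 cardsU1 SJ_mem (negbTE cx) card_SJ !inE /=.
  by rewrite N_notin /= !add1n ltnn.
move=> xN; rewrite rootNN //=; apply/codomP => [[u ex']].
by move/isrootP: (rJ u) => /(_ None); rewrite -ex' xN.
Qed.

Lemma weightF F : sg_weight (ground_weight W) (fmap F) = sg_weight (fun i j => W i j) F.
Proof.
rewrite /sg_weight (bigID (fun a : option 'I_n * option 'I_n => a.2 == None)) /=.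
rewrite big1 ?mul1r; last first.
  move=> [[x|] b] /andP [ain /eqP /= e]; first by rewrite e.
  by rewrite fmapN in ain.
set h := fun a : 'I_n * 'I_n => (Some a.1, Some a.2).
have hinj : injective h by move=> [a1 a2] [b1 b2] [-> ->].
rewrite (eq_bigl (fun a => a \in h @: F)); last first.
  move=> [[x|] [y|]] /=; rewrite ?fmapSN ?fmapN ?andbF /=.
  - by rewrite fmapSS andbT; change (Some x, Some y) with (h (x, y)); rewrite mem_imset.
  - by apply/esym/imsetP => [[b _]].
  - by apply/esym/imsetP => [[b _]].
  - by apply/esym/imsetP => [[b _]].
rewrite big_imset /=; last by move=> a b _ _; apply: hinj.
by apply: eq_bigr => [[x y]].
Qed.
End Main.

Unset Implicit Arguments.

Theorem lemma1 (R : realFieldType) (n : nat) (W : 'M[R]_n) (k : nat)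
  (I J : 'I_k -> 'I_n) :
  (1 < n)%N ->
  (forall i j, 0 <= W i j) ->
  (forall i, W i i = 0) ->
  (k <= n)%N -> injective I -> injective J ->
  exists f : {set 'I_n * 'I_n} -> {set option 'I_n * option 'I_n},
    [/\ forall F, inA W I J F -> inB W I J (f F),
        forall F1 F2, inA W I J F1 -> inA W I J F2 -> f F1 = f F2 -> F1 = F2,
        forall G, inB W I J G -> exists2 F, inA W I J F & f F = G &
        forall F, inA W I J F ->
          sg_weight (ground_weight W) (f F) = sg_weight (fun i j => W i j) F].
Proof.
move=> _ _ _ _ _ Jinj; exists (fmap J); split.
- by move=> F; apply: partA.
- by move=> F1 F2 _ _ e; rewrite -(gfK J F1) e gfK.
- by move=> G HG; have [HA HE] := partB Jinj HG; exists (gmap G).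
- by move=> F _; apply: weightF.
Qed.
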